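(* $\mathsf{LeaderElection}\in\mathsf{dMAM}[O(1)]$, where in $\mathsf{LeaderElection}$ each node of the $n$-node communication graph holds an input bit indicating whether it is marked as leader, and the instance is in the language iff exactly one node is marked as leader.
   Context: Distributed interactive proofs (model). An instance consists of a connected communication graph $G=(V,E)$ with $|V|=n$, where each node has a unique identifier of $O(\log n)$ bits, knows $n$, knows its own identifier, its local input (if the problem has local inputs), and the identifiers of its neighbours (with an arbitrary port numbering of its incident edges). A prover, who sees the whole instance, interacts with all nodes in $r$ alternating messages. In a verifier (node) message each node independently samples fresh uniformly random bits and sends them to the prover (public coins). In a prover message the prover sends each node a string. Nodes may additionally exchange the strings they received from the prover with their neighbours in $G$. At the end each node deterministically accepts or rejects as a function of its local information, its own random bits, the strings it received from the prover and those its neighbours received; the instance is accepted iff all nodes accept. The proof size is the maximum number of bits in any single message between the prover and any node. A language $\mathcal L$ (set of instances) is in $\mathsf{dIP}[r,\ell]$ if there is an $r$-message protocol of proof size $\ell=\ell(n)$ such that (completeness) for every instance in $\mathcal L$ some prover makes all nodes accept with probability $>2/3$, and (soundness) for every instance not in $\mathcal L$ and every prover, all nodes accept with probability $<1/3$ (probabilities over the nodes' coins). $\mathsf{dAM}[\ell]$, $\mathsf{dMAM}[\ell]$, $\mathsf{dAMAM}[\ell]$, $\mathsf{dMAMAM}[\ell]$ denote the cases of 2, 3, 4, 5 messages, where the letters indicate who sends each message in order (A = nodes send random coins, M = prover). *)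

(* Defs.v *)
(* Model of distributed interactive proofs with 3 messages
   (dMAM: prover, then node coins, then prover), constant proof size. *)
From HB Require Import structures.
From mathcomp Require Import all_boot.
Set Implicit Arguments. Unset Strict Implicit. Unset Printing Implicit Defensive.

(* Well-formed instance on node set 'I_n:
   - n >= 1, e is a simple (symmetric, irreflexive) connected graph;
   - ports v lists the neighbours of v, each exactly once, in the order of an
     (arbitrary) port numbering;
   - id is an injective identifier assignment with O(log n)-bit ids,
     i.e. id v < n ^ c for the fixed constant c. *)
Definition well_formed_instance (c n : nat) (e : rel 'I_n)
    (ports : 'I_n -> seq 'I_n) (id : 'I_n -> nat) : Prop :=
  0 < n /\ symmetric e /\ irreflexive e /\ (forall u v, connect e u v) /\
  (forall v, uniq (ports v) /\ (forall u, (u \in ports v) = e v u)) /\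
  injective id /\ (forall v, id v < n ^ c).

Record view := View {
  v_n : nat;
  v_id : nat;
  v_input : bool;
  v_nbr_ids : seq nat;
  v_coins : seq bool;
  v_msg1 : seq bool;
  v_msg2 : seq bool;
  v_nbr_msgs : seq (seq bool * seq bool)
}.

Record dMAM_protocol := DMAMProtocol {
  coins : nat -> nat;
  decide : view -> bool
}.

Definition coin_space (P : dMAM_protocol) (n : nat) : finType :=
  {ffun 'I_n -> (coins P n).-tuple bool}.

Definition all_accept (P : dMAM_protocol) (n : nat) (ports : 'I_n -> seq 'I_n)
    (id : 'I_n -> nat) (inp : 'I_n -> bool) (m1 : 'I_n -> seq bool)
    (m2 : coin_space P n -> 'I_n -> seq bool) (r : coin_space P n) : bool :=
  [forall v : 'I_n,
     decide P (View n (id v) (inp v) [seq id u | u <- ports v]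
                    (val (r v)) (m1 v) (m2 r v)
                    [seq (m1 u, m2 r u) | u <- ports v])].

(* number of accepting coin outcomes (probability = this / #|coin_space P n|) *)
Definition n_accept (P : dMAM_protocol) (n : nat) (ports : 'I_n -> seq 'I_n)
    (id : 'I_n -> nat) (inp : 'I_n -> bool) (m1 : 'I_n -> seq bool)
    (m2 : coin_space P n -> 'I_n -> seq bool) : nat :=
  #|[pred r : coin_space P n | all_accept ports id inp m1 m2 r]|.

Definition language := forall n : nat,
  rel 'I_n -> ('I_n -> seq 'I_n) -> ('I_n -> nat) -> ('I_n -> bool) -> Prop.

(* Lang \in dMAM[O(1)] (identifiers below n^c): there is a protocol and a
   constant L bounding all messages (coins and honest prover messages),
   uniformly in n, with completeness > 2/3 and soundness < 1/3 against every
   prover. *)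
Definition in_dMAM_O1 (c : nat) (Lang : language) : Prop :=
  exists (L : nat) (P : dMAM_protocol),
    (forall n, coins P n <= L) /\
    forall n (e : rel 'I_n) (ports : 'I_n -> seq 'I_n) (id : 'I_n -> nat)
           (inp : 'I_n -> bool),
      well_formed_instance c e ports id ->
      (Lang n e ports id inp ->
         exists (m1 : 'I_n -> seq bool) (m2 : coin_space P n -> 'I_n -> seq bool),
           [/\ (forall v, size (m1 v) <= L),
               (forall r v, size (m2 r v) <= L) &
               2 * #|coin_space P n| < 3 * n_accept ports id inp m1 m2]) /\
      (~ Lang n e ports id inp ->
         forall (m1 : 'I_n -> seq bool) (m2 : coin_space P n -> 'I_n -> seq bool),
           3 * n_accept ports id inp m1 m2 < #|coin_space P n|).

Definition LeaderElection : language :=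
  fun n _ _ _ inp => #|[pred v : 'I_n | inp v]| = 1.

(* Main.v *)
Require Import Defs.
From HB Require Import structures.
From mathcomp Require Import all_boot zify.
Set Implicit Arguments. Unset Strict Implicit. Unset Printing Implicit Defensive.

Definition dv (s : seq bool) : nat := nth false s 0 + 2 * nth false s 1.
Definition lab (s : seq bool) : nat := dv s %% 3.
Definition enc (k : nat) : seq bool := [:: odd k; odd k./2].
Definition candp (L : nat) (t : seq bool * seq bool) : bool := lab t.1 == (L + 2) %% 3.

Definition dec (V : view) : bool :=
  let ms := v_nbr_msgs V in
  let c := dv (v_coins V) in
  let y := dv (v_msg2 V) in
  let b := dv (drop 2 (v_msg2 V)) in
  all (fun t => dv (drop 2 t.2) == b) ms &&
  (if v_input V then (y == c) && (b == c)
   else let i := find (candp (lab (v_msg1 V))) ms in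
        (i < size ms) && (y == (c + dv (nth ([::],[::]) ms i).2) %% 4)).

Definition Pr : dMAM_protocol := DMAMProtocol (fun _ => 2) dec.

Arguments enc : simpl never.

Lemma dv_lt4 s : dv s < 4.
Proof. by rewrite /dv; case: (nth false s 0); case: (nth false s 1). Qed.

Lemma dv_enc k : k < 4 -> dv (enc k) = k.
Proof. by case: k => [|[|[|[|k]]]]. Qed.

Lemma dv_encC k s : dv (enc k ++ s) = dv (enc k).
Proof. by []. Qed.

Lemma drop_enc k s : drop 2 (enc k ++ s) = s.
Proof. by rewrite drop_size_cat. Qed.

Definition enct (k : nat) : 2.-tuple bool := [tuple odd k; odd k./2].

Lemma enct_dv (t : 2.-tuple bool) : t = enct (dv t).
Proof.
apply: val_inj; case: t => [[|a [|b []]] //= _].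
by case: a; case: b.
Qed.

Lemma dv_enct k : k < 4 -> dv (enct k) = k.
Proof. exact: dv_enc. Qed.

Lemma count4 (T : finType) (phi : T -> nat) (g : nat -> T -> T) :
  (forall j, injective (g j)) ->
  (forall r j, j < 4 -> phi r = 0 -> phi (g j r) = j) ->
  4 * #|[pred r | phi r == 0]| <= #|T|.
Proof.
move=> ginj gphi.
pose h (p : 'I_4 * {r : T | phi r == 0}) := g p.1 (val p.2).
have hinj : injective h.
  move=> [i [r hr]] [j [s hs]]; rewrite /h /= => E.
  have Eij : i = j.
    apply: val_inj => /=; rewrite -(gphi r i (ltn_ord i) (eqP hr)).
    by rewrite E (gphi s j (ltn_ord j) (eqP hs)).
  subst j; move/ginj: E => E; subst s.
  by rewrite (bool_irrelevance hr hs).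
have := leq_card h hinj; rewrite card_prod card_ord card_sig.
by [].
Qed.

Definition cc n (r : coin_space Pr n) (v : 'I_n) : nat := dv (val (r v)).

Definition gp n (w : 'I_n) (j : nat) (r : coin_space Pr n) : coin_space Pr n :=
  [ffun v => if v == w then enct ((cc r w + j) %% 4) else r v].

Lemma cc_lt4 n (r : coin_space Pr n) v : cc r v < 4.
Proof. exact: dv_lt4. Qed.

Lemma cc_gp n (w : 'I_n) j r v :
  cc (gp w j r) v = if v == w then (cc r w + j) %% 4 else cc r v.
Proof.
rewrite /cc /gp ffunE; case: eqP => // _.
by rewrite dv_enct // ltn_mod.
Qed.

Lemma gp_inj n (w : 'I_n) j : injective (gp w j).
Proof.
move=> r s E; apply/ffunP => v.
have := congr1 (fun f : coin_space Pr n => f v) E; rewrite /gp !ffunE.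
case: eqP => [-> | //] E2.
have := congr1 (fun t : 2.-tuple bool => dv t) E2.
rewrite !dv_enct ?ltn_mod // => E3.
have H : cc r w = cc s w.
  have := cc_lt4 r w; have := cc_lt4 s w; move: E3; lia.
by rewrite (enct_dv (r w)) (enct_dv (s w)); congr enct.
Qed.

Lemma card_cs_gt0 n : 0 < #|coin_space Pr n|.
Proof. by apply/card_gt0P; exists [ffun=> (enct 0 : (coins Pr n).-tuple bool)]. Qed.

Lemma sound_count n (phi : coin_space Pr n -> nat) (w : 'I_n) (A : pred (coin_space Pr n)) :
  (forall r j, j < 4 -> phi r = 0 -> phi (gp w j r) = j) ->
  (forall r, A r -> phi r = 0) -> 3 * #|A| < #|coin_space Pr n|.
Proof.
move=> Hg HA.
have H4 := count4 (@gp_inj n w) Hg.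
have sub : #|A| <= #|[pred r | phi r == 0]|.
  by apply: subset_leq_card; apply/subsetP => r /HA hr; rewrite inE /= hr.
have := card_cs_gt0 n; lia.
Qed.

Definition cand n (m1 : 'I_n -> seq bool) (v u : 'I_n) : bool :=
  lab (m1 u) == (lab (m1 v) + 2) %% 3.
Definition par n (ports : 'I_n -> seq 'I_n) (m1 : 'I_n -> seq bool) (v : 'I_n) : 'I_n :=
  nth v (ports v) (find (cand m1 v) (ports v)).

Definition bb n (m2 : 'I_n -> seq bool) v := dv (drop 2 (m2 v)).

Lemma acc_dec n ports (id : 'I_n -> nat) inp m1 (m2 : coin_space Pr n -> 'I_n -> seq bool) r v :
  all_accept ports id inp m1 m2 r ->
  [/\ forall u, u \in ports v -> bb (m2 r) u = bb (m2 r) v,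
      inp v -> dv (m2 r v) = cc r v /\ bb (m2 r) v = cc r v &
      ~~ inp v -> has (cand m1 v) (ports v) /\
                  dv (m2 r v) = (cc r v + dv (m2 r (par ports m1 v))) %% 4].
Proof.
move=> /forallP /(_ v); rewrite /= /dec /= => /andP [Hall Hrest]; split.
- move=> u hu; move/allP: Hall => /(_ (m1 u, m2 r u)) /=.
  by move=> /(_ (map_f _ hu)) /eqP.
- by move=> hi; move: Hrest; rewrite hi => /andP [/eqP h1 /eqP h2]; split.
- move=> hi; move: Hrest; rewrite (negbTE hi) => /andP [hs /eqP ->].
  have Ef : find (candp (lab (m1 v))) [seq (m1 u, m2 r u) | u <- ports v]
            = find (cand m1 v) (ports v).
    by rewrite find_map; apply: eq_find => u.
  move: hs; rewrite Ef size_map => hs; split; first by rewrite has_find.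
  by rewrite (nth_map v) // /par.
Qed.

Lemma cycle_exists n (f : 'I_n -> 'I_n) (v0 : 'I_n) :
  exists w k, [/\ 0 < k, iter k f w = w & forall t, 0 < t < k -> iter t f w != w].
Proof.
have [i [j [ne Eij]]] : exists (i j : 'I_n.+1), i != j /\ iter i f v0 = iter j f v0.
  pose h (i : 'I_n.+1) := iter i f v0.
  case: (boolP (injectiveb h)) => [/injectiveP hi | ].
    by have := leq_card h hi; rewrite !card_ord ltnn.
  by move/injectivePn => [x [y nxy hxy]]; exists x, y.
wlog lt : i j ne Eij / i < j.
  move=> W; case: (ltngtP i j) => h; first exact: W h.
  - by apply: (W j i) => //; rewrite eq_sym.
  - by move/eqP: ne; case; apply: val_inj.
pose w0 := iter i f v0.
have ex : exists k, (0 < k) && (iter k f w0 == w0).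
  exists (j - i); apply/andP; split; first by rewrite subn_gt0.
  by rewrite /w0 -iterD subnK ?(ltnW lt) // Eij.
case: (ex_minnP ex) => k /andP [k0 /eqP hk] kmin.
exists w0, k; split => // t /andP [t0 tk]; apply/negP => /eqP ht.
have := kmin t; rewrite t0 ht eqxx => /(_ isT); rewrite leqNgt tk.
by [].
Qed.

Lemma sound0 n ports (id : 'I_n -> nat) inp m1 (m2 : coin_space Pr n -> 'I_n -> seq bool) :
  0 < n -> (forall v, ~~ inp v) ->
  3 * n_accept ports id inp m1 m2 < #|coin_space Pr n|.
Proof.
move=> n0 noL.
have [w [k [k0 hk kmin]]] := cycle_exists (par ports m1) (Ordinal n0).
pose f := par ports m1.
pose phi (r : coin_space Pr n) := (\sum_(t < k) cc r (iter t f w)) %% 4.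
rewrite /n_accept; apply: (@sound_count n phi w).
- move=> r j j4 h0; rewrite /phi.
  move: h0; rewrite /phi; clear phi; case: k k0 hk kmin => // k _ _ kmin.
  rewrite !big_ord_recl /= !cc_gp eqxx.
  move=> h0.
  have E : \sum_(i < k) cc (gp w j r) (f (iter (0 + i) f w)) = \sum_(i < k) cc r (f (iter (0 + i) f w)).
    apply: eq_bigr => t _; rewrite cc_gp add0n.
    have := kmin t.+1; rewrite /= ltnS ltn_ord => /(_ isT) /negbTE.
    by rewrite /f => ->.
  rewrite E; move: h0; set S := \sum_(i < k) _ => h0.
  have := cc_lt4 r w; lia.
- move=> r /= acc.
  have step : forall m, dv (m2 r w) = (\sum_(t < m) cc r (iter t f w) + dv (m2 r (iter m f w))) %% 4.
    elim=> [|m IH]; first by rewrite big_ord0 add0n modn_small ?dv_lt4.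
    have [_ _ /(_ (noL _)) [_ E]] := acc_dec (iter m f w) acc.
    rewrite IH big_ord_recr /= E /f.
    set a := \sum_(i < m) _; set b := cc r _; set y := dv _.
    rewrite modnDmr addnA //.
  have := step k; rewrite hk /phi.
  have := dv_lt4 (m2 r w); lia.
Qed.

Lemma sound2 n (e : rel 'I_n) ports (id : 'I_n -> nat) (inp : 'I_n -> bool) m1 (m2 : coin_space Pr n -> 'I_n -> seq bool) u w :
  (forall x y, connect e x y) -> (forall v x, (x \in ports v) = e v x) ->
  inp u -> inp w -> u != w ->
  3 * n_accept ports id inp m1 m2 < #|coin_space Pr n|.
Proof.
move=> conn hp iu iw uw.
pose phi (r : coin_space Pr n) := (cc r w + 4 - cc r u) %% 4.
rewrite /n_accept; apply: (@sound_count n phi w).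
- move=> r j j4; rewrite /phi !cc_gp eqxx (negbTE uw).
  have := cc_lt4 r w; have := cc_lt4 r u; lia.
- move=> r /= acc.
  have bconst : forall x y, connect e x y -> bb (m2 r) y = bb (m2 r) x.
    move=> x y /connectP [p pth ->]; elim: p x pth => //= z p IH x /andP [exz pth].
    rewrite IH //.
    by have [H _ _] := acc_dec x acc; apply: H; rewrite hp.
  have [_ /(_ iu) [_ Hu] _] := acc_dec u acc.
  have [_ /(_ iw) [_ Hw] _] := acc_dec w acc.
  have := bconst u w (conn u w); rewrite Hu Hw /phi => ->.
  have := cc_lt4 r u; lia.
Qed.

Fixpoint reach n (e : rel 'I_n) (l : 'I_n) (k : nat) (v : 'I_n) : bool :=
  if k is k'.+1 then reach e l k' v || [exists u, reach e l k' u && e u v]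
  else v == l.

Lemma reach_mono n (e : rel 'I_n) l k m v : k <= m -> reach e l k v -> reach e l m v.
Proof.
move=> /subnK <-; elim: (m - k) => // j IH h.
by rewrite addSn /= IH.
Qed.

Lemma reach_path n (e : rel 'I_n) l p : forall x k, reach e l k x -> path e x p ->
  reach e l (k + size p) (last x p).
Proof.
elim: p => [|z p IH] x k hx /=; first by rewrite addn0.
move=> /andP [exz pth]; rewrite addnS -addSn; apply: IH pth => /=.
by apply/orP; right; apply/existsP; exists x; rewrite hx.
Qed.

Lemma exists_reach n (e : rel 'I_n) l v : connect e l v -> exists k, reach e l k v.
Proof.
move=> /connectP [p pth ->]; exists (0 + size p); apply: reach_path => //=.
Qed.

Definition dist n (e : rel 'I_n) l (H : forall v, exists k, reach e l k v) v : nat :=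
  ex_minn (H v).

Lemma dist_spec n (e : rel 'I_n) (l : 'I_n) (H : forall v, exists k, reach e l k v) v :
  reach e l (@dist n e l H v) v /\ forall m, reach e l m v -> @dist n e l H v <= m.
Proof. by rewrite /dist; case: ex_minnP. Qed.

Lemma dist_l n (e : rel 'I_n) (l : 'I_n) (H : forall v, exists k, reach e l k v) : @dist n e l H l = 0.
Proof. by have [_ /(_ 0)] := dist_spec H l; rewrite /= eqxx => /(_ isT); case: dist. Qed.

Lemma dist_edge n (e : rel 'I_n) (l : 'I_n) (H : forall v, exists k, reach e l k v) x y : e x y -> dist H y <= (dist H x).+1.
Proof.
move=> exy; have [hx _] := dist_spec H x; have [_ hy] := dist_spec H y.
apply: hy => /=; apply/orP; right; apply/existsP; exists x; by rewrite hx.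
Qed.

Lemma dist_pred n (e : rel 'I_n) (l : 'I_n) (H : forall v, exists k, reach e l k v) v : v != l ->
  exists u, e u v /\ (dist H u).+1 = dist H v.
Proof.
move=> vl; have [hv hmin] := dist_spec H v.
move: hv hmin; case Ed: (dist H v) => [|k].
  by move=> /= /eqP E; rewrite E eqxx in vl.
move=> /= /orP [hk | /existsP [u /andP [hu euv]]] hmin.
  by have := hmin k hk; rewrite ltnn.
exists u; split => //.
have [_ hum] := dist_spec H u.
have h1 := hum k hu.
have h2 := dist_edge H euv.
lia.
Qed.

Lemma lab_enc k : lab (enc (k %% 3)) = k %% 3.
Proof. by rewrite /lab dv_enc ?modn_mod // (leq_trans (ltn_pmod _ _)). Qed.

Opaque enc.
Lemma complete n (e : rel 'I_n) (ports : 'I_n -> seq 'I_n) (id : 'I_n -> nat)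
   (inp : 'I_n -> bool) (l : 'I_n) :
  symmetric e -> (forall x y, connect e x y) -> (forall v x, (x \in ports v) = e v x) ->
  (forall v, inp v = (v == l)) ->
  exists (m1 : 'I_n -> seq bool) (m2 : coin_space Pr n -> 'I_n -> seq bool),
    [/\ (forall v, size (m1 v) <= 4), (forall r v, size (m2 r v) <= 4) &
        2 * #|coin_space Pr n| < 3 * n_accept ports id inp m1 m2].
Proof.
move=> sym conn hp hinp.
pose H := fun v => exists_reach (conn l v).
pose d := @dist n e l H.
pose m1 v := enc (d v %% 3).
pose f := par ports m1.
have key : forall v, v != l ->
   [/\ has (cand m1 v) (ports v), f v \in ports v & (d (f v)).+1 = d v].
  move=> v vl; have [u [euv du]] := dist_pred H vl; rewrite -/d in du.
  have hc : forall x, cand m1 v x = (d x %% 3 == (d v %% 3 + 2) %% 3).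
    by move=> x; rewrite /cand /m1 !lab_enc.
  have hh : has (cand m1 v) (ports v).
    apply/hasP; exists u; first by rewrite hp sym.
    rewrite hc -du; apply/eqP; lia.
  have fin : f v \in ports v by rewrite /f /par mem_nth // -has_find.
  have cf : cand m1 v (f v) by rewrite /f /par nth_find.
  split => //.
  move: cf; rewrite hc => /eqP cf.
  have e1 : e v (f v) by rewrite -hp.
  have h1 := dist_edge H e1.
  have h2 := dist_edge H (etrans (sym _ _) e1).
  rewrite -/d in h1 h2 *; lia.
pose y (r : coin_space Pr n) v := (\sum_(i < (d v).+1) cc r (iter i f v)) %% 4.
exists m1, (fun r v => enc (y r v) ++ enc (cc r l)); split => //.
have all1 : forall r, all_accept ports id inp m1 (fun r v => enc (y r v) ++ enc (cc r l)) r.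
  move=> r; apply/forallP => v; rewrite /= /dec /=; apply/andP; split.
    by rewrite all_map; apply/allP => u _ /=; rewrite !drop_enc.
  rewrite hinp; case: eqP => [-> | /eqP vl].
    rewrite dv_encC !drop_enc dv_enc /y ?ltn_mod // /d dist_l big_ord1 /=.
    by rewrite dv_enc ?cc_lt4 // modn_small ?cc_lt4 // eqxx.
  have [hh fin df] := key v vl.
  have Ef : find (candp (lab (m1 v))) [seq (m1 u, enc (y r u) ++ enc (cc r l)) | u <- ports v]
            = find (cand m1 v) (ports v).
    by rewrite find_map; apply: eq_find => u.
  rewrite Ef size_map -has_find hh /= (nth_map v) -?has_find //.
  rewrite !dv_encC !dv_enc ?ltn_mod //.
  rewrite /y -df big_ord_recl /=.
  rewrite -[nth v _ _]/(f v) -/(cc r v).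
  under eq_bigr => i _ do rewrite add0n -iterS iterSr.
  by rewrite modnDmr.
have -> : n_accept ports id inp m1 (fun r v => enc (y r v) ++ enc (cc r l)) = #|coin_space Pr n|.
  by apply: eq_card => r; rewrite inE all1.
have := card_cs_gt0 n; lia.
Qed.

Theorem corollary1p7 : forall c : nat, in_dMAM_O1 c LeaderElection.
Proof.
move=> c; exists 4, Pr; split => // n e ports id inp [n0 [sym [irr [conn [hports _]]]]].
have hp : forall v x, (x \in ports v) = e v x by move=> v x; case: (hports v).
rewrite /LeaderElection; split.
- move=> h1.
  have [l hl] : exists l, l \in [pred v | inp v].
    by apply/card_gt0P; rewrite h1.
  apply: (@complete n e ports id inp l) => // v.
  case: eqP => [-> | /eqP vl]; first by move: hl; rewrite inE.
  apply/negP => iv.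
  have : 1 < #|[pred v | inp v]| by apply/card_gt1P; exists v, l; rewrite inE iv hl.
  by rewrite h1.
- move=> h1 m1 m2.
  case: (posnP #|[pred v | inp v]|) => [h0 | hpos].
    apply: sound0 => // v; have := card0_eq h0 v; rewrite !inE => ->; by [].
  have : 1 < #|[pred v | inp v]| by move: h1 hpos; lia.
  move/card_gt1P => [u [w [iu iw uw]]].
  by apply: (@sound2 n e ports id inp m1 m2 u w).
Qed.
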